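(* The number of $\mathbb{F}_q$-linear automorphisms of $\mathbb{F}_{q^m}$ that are fully linear over $\mathbb{F}_{q^m}$ is exactly $m(q^m-1)$.
   Context: $q$ is a prime power (the paper takes $q$ a power of $2$). An $\mathbb{F}_q$-linear automorphism of $\mathbb{F}_{q^m}$ is a bijective $\mathbb{F}_q$-linear map $\varphi:\mathbb{F}_{q^m}\to\mathbb{F}_{q^m}$, applied componentwise to vectors. For an $\mathbb{F}_{q^m}$-linear code $\mathcal{C}\subseteq\mathbb{F}_{q^m}^n$, $\varphi$ is linear on $\mathcal{C}$ if $\varphi(\mathcal{C})=\{\varphi(\bm{c}):\bm{c}\in\mathcal{C}\}$ is an $\mathbb{F}_{q^m}$-linear subspace. $\varphi$ is fully linear over $\mathbb{F}_{q^m}$ if it is linear on every $\mathbb{F}_{q^m}$-linear code of every length $n\ge1$. *)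

(* Defs.v *)
From HB Require Import structures.
From mathcomp Require Import all_boot all_order all_algebra all_field.
Set Implicit Arguments. Unset Strict Implicit. Unset Printing Implicit Defensive.
Import GRing.Theory.
Local Open Scope ring_scope.

(* L plays the role of F_{q^m}; the subfield F_q is {c : L | c^q = c}. *)
Definition in_Fq (q : nat) (L : finFieldType) (c : L) : bool := c ^+ q == c.

Definition Fq_linear (q : nat) (L : finFieldType) (f : L -> L) : Prop :=
  (forall x y : L, f (x + y) = f x + f y) /\
  (forall c x : L, in_Fq q c -> f (c * x) = c * f x).

Definition Fq_lin_aut (q : nat) (L : finFieldType) (f : L -> L) : Prop :=
  Fq_linear q f /\ bijective f.

Definition linear_on (L : finFieldType) (n : nat) (f : L -> L)
    (C : {vspace 'rV[L]_n}) : Prop :=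
  exists D : {vspace 'rV[L]_n},
    forall w : 'rV[L]_n, w \in D <-> exists2 c, c \in C & w = map_mx f c.

Definition fully_linear (L : finFieldType) (f : L -> L) : Prop :=
  forall n : nat, (0 < n)%N -> forall C : {vspace 'rV[L]_n}, linear_on f C.

(* Main.v *)
Require Import Defs.
From HB Require Import structures.
From mathcomp Require Import all_boot all_order all_algebra all_field all_fingroup all_solvable.
From mathcomp Require Import zify.
Set Implicit Arguments. Unset Strict Implicit. Unset Printing Implicit Defensive.
Import GRing.Theory.
Local Open Scope ring_scope.

Section Morph.
Variables (L : finFieldType) (h : L -> L).
Hypotheses (hD : forall x y, h (x + y) = h x + h y) (hM : forall x y, h (x * y) = h x * h y) (h1 : h 1 = 1).

Let h0 : h 0 = 0.
Proof. by apply: (addrI (h 0)); rewrite -hD !addr0. Qed.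

HB.instance Definition _ := GRing.isNmodMorphism.Build L L h (h0, hD).
HB.instance Definition _ := GRing.isMonoidMorphism.Build L L h (h1, hM).

Lemma map_prod_XsubC (rs : seq L) :
  map_poly h (\prod_(x <- rs) ('X - x%:P)) = \prod_(x <- map h rs) ('X - x%:P).
Proof. rewrite rmorph_prod big_map; apply: eq_bigr => x _. exact: map_polyXsubC. Qed.

Lemma root_h (P : {poly L}) x : root P x -> root (map_poly h P) (h x).
Proof. exact: rmorph_root. Qed.

Lemma hX x n : h (x ^+ n) = h x ^+ n.
Proof. exact: rmorphXn. Qed.

End Morph.
Lemma unit_gen (L : finFieldType) : exists u : {unit L},
  (forall x : L, x != 0 -> exists n, x = val u ^+ n) /\ #[u]%g = #|L|.-1.
Proof.
have /cyclicP [u Du] := field_unit_group_cyclic [set: {unit L}]%G.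
exists u; split.
  move=> x x0; have ux : x \is a GRing.unit by rewrite unitfE.
  have : (FinRing.unit L ux) \in <[u]>%g by rewrite -Du inE.
  by case/cycleP => n /(congr1 val) /= ->; exists n; rewrite FinRing.val_unitX.
by rewrite /order -Du card_finField_unit.
Qed.
Section Field.
Variables (L : finFieldType) (p k q m : nat).
Hypotheses (pp : prime p) (kp : (0 < k)%N) (qE : q = (p ^ k)%N) (mp : (0 < m)%N)
  (cardL : #|L| = (q ^ m)%N).

Lemma q_gt1 : (1 < q)%N.
Proof. by rewrite qE -(expn0 p) ltn_exp2l ?prime_gt1. Qed.

Lemma charL : p \in [pchar L].
Proof. by apply: (@card_finPcharP L p (k * m)) => //; rewrite cardL qE expnM. Qed.

Lemma powqD i (x y : L) : (x + y) ^+ (q ^ i) = x ^+ (q ^ i) + y ^+ (q ^ i).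
Proof.
apply: exprDn_pchar; rewrite (eq_pnat _ (pcharf_eq charL)) qE -expnM.
by rewrite pnatX pnat_id.
Qed.

Lemma powq_m (x : L) : x ^+ (q ^ m) = x.
Proof. by rewrite -cardL expf_card. Qed.

Lemma powq_inv i (x : L) : (i <= m)%N -> (x ^+ (q ^ i)) ^+ (q ^ (m - i)) = x.
Proof. by move=> im; rewrite -exprM -expnD subnKC // powq_m. Qed.

Lemma powq_inv' i (x : L) : (i <= m)%N -> (x ^+ (q ^ (m - i))) ^+ (q ^ i) = x.
Proof. by move=> im; rewrite -exprM -expnD addnC subnKC // powq_m. Qed.

Lemma in_Fq_pow (c : L) i : in_Fq q c -> c ^+ (q ^ i) = c.
Proof.
move=> /eqP cq; elim: i => [|i IH]; first by rewrite expr1.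
by rewrite expnSr exprM IH cq.
Qed.

Lemma powq0 i : (0 : L) ^+ (q ^ i) = 0.
Proof. by rewrite expr0n expn_eq0 (negbTE (lt0n_neq0 (ltnW q_gt1))). Qed.

Lemma aut_char (g : L -> L) :
  (forall x y, g (x + y) = g x + g y) -> (forall x y, g (x * y) = g x * g y) ->
  g 1 = 1 -> (forall c, in_Fq q c -> g c = c) ->
  exists2 i, (i < m)%N & forall x, g x = x ^+ (q ^ i).
Proof.
move=> gD gM g1 gF.
have g0 : g 0 = 0 by apply: (addrI (g 0)); rewrite -gD !addr0.
have [u [genu _]] := unit_gen L.
set a := val u.
have frobD : forall x y : L, (x + y) ^+ q = x ^+ q + y ^+ q.
  by move=> x y; have := powqD 1 x y; rewrite expn1.
have frobM : forall x y : L, (x * y) ^+ q = x ^+ q * y ^+ q by move=> x y; rewrite exprMn.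
have frob1 : (1 : L) ^+ q = 1 by rewrite expr1n.
have q0 : q != 0%N by rewrite -lt0n (ltnW q_gt1).
set rs := [seq a ^+ (q ^ i) | i <- iota 0 m].
set P := \prod_(x <- rs) ('X - x%:P).
have hP : map_poly (fun x => x ^+ q) P = P.
  rewrite /P (map_prod_XsubC frobD frobM frob1); apply: perm_big.
  rewrite /rs -map_comp.
  have -> : [seq ((fun x : L => x ^+ q) \o (fun i => a ^+ (q ^ i))) i | i <- iota 0 m]
          = [seq a ^+ (q ^ i) | i <- iota 1 m].
    rewrite -(addn0 1%N) iotaDl -map_comp;   by apply: eq_map => i /=; rewrite -exprM add1n expnSr.
  have [m' Em] : exists m', m = m'.+1 by exists m.-1; rewrite prednK.
  have am : a ^+ (q ^ m'.+1) = a by rewrite -Em powq_m.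
  rewrite Em -[in iota 1 _](addn1 m') iotaD map_cat add1n /= am expn0 expr1.
  by rewrite perm_catC cat1s.
have cF : forall j, in_Fq q P`_j.
  move=> j; rewrite /in_Fq; apply/eqP.
  by rewrite -{2}hP coef_map_id0 // expr0n (negbTE q0).
have hg : map_poly g P = P by apply/polyP => j; rewrite coef_map_id0 // gF.
have a0 : a != 0 by rewrite -unitfE (valP u).
have rootPa : root P a.
  by rewrite root_prod_XsubC; apply/mapP; exists 0%N; rewrite ?mem_iota ?expn0 ?expr1.
have := root_h gD gM g1 rootPa; rewrite hg root_prod_XsubC => /mapP [i].
rewrite mem_iota add0n => im gai; exists i => // x.
have [-> | x0] := eqVneq x 0; first by rewrite g0 powq0.
have [n ->] := genu x x0.
by rewrite (hX gD gM g1) -/a gai exprAC.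
Qed.

Lemma pow_inj i j : (i < m)%N -> (j < m)%N ->
  (forall x : L, x ^+ (q ^ i) = x ^+ (q ^ j)) -> i = j.
Proof.
have H : forall i j, (i < j)%N -> (j < m)%N ->
    (forall x : L, x ^+ (q ^ i) = x ^+ (q ^ j)) -> False.
  move=> {}i {}j ij jm E.
  have [u [_ ou]] := unit_gen L.
  have q1 := q_gt1.
  have qij : (q ^ i < q ^ j)%N by rewrite ltn_exp2l.
  have qjm : (q ^ j < q ^ m)%N by rewrite ltn_exp2l.
  have qi0 : (0 < q ^ i)%N by rewrite expn_gt0 (ltnW q1).
  have a0 : val u != 0 by rewrite -unitfE (valP u).
  have : (u ^+ (q ^ j - q ^ i) == 1)%g.
    apply/eqP/val_inj; rewrite FinRing.val_unitX /=.
    apply: (mulfI (expf_neq0 (q ^ i) a0)).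
    by rewrite -exprD subnKC ?(ltnW qij) // -E mulr1.
  rewrite -order_dvdn ou cardL => /dvdn_leq.
  rewrite subn_gt0 qij => /(_ isT).
  lia.
move=> im jm E; case: (ltngtP i j) => // ij.
  by case: (H i j).
by case: (H j i) => // x; rewrite E.
Qed.

Lemma good_aut (a : L) i (f : L -> L) : a != 0 -> (i < m)%N ->
  (forall x, f x = a * x ^+ (q ^ i)) -> Fq_lin_aut q f /\ fully_linear f.
Proof.
move=> a0 im fE; have im' := ltnW im.
have fD : forall x y, f (x + y) = f x + f y by move=> x y; rewrite !fE powqD mulrDr.
have f0 : f 0 = 0 by rewrite fE powq0 mulr0.
have fZ : forall mu x, mu * f x = f (mu ^+ (q ^ (m - i)) * x).
  by move=> mu x; rewrite !fE exprMn powq_inv' // mulrCA.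
split.
  split; first split.
  - exact: fD.
  - by move=> c x Fc; rewrite !fE exprMn (in_Fq_pow _ Fc) mulrCA.
  exists (fun y => (y / a) ^+ (q ^ (m - i))) => [x|y].
    by rewrite fE mulrAC divff // mul1r powq_inv.
  by rewrite fE powq_inv' // mulrC divfK.
move=> n _ C.
set S := [seq map_mx f w | w in C].
exists <<S>>%VS => w; split => [Hw | [c Cc ->]]; last first.
  by apply: memv_span; apply/imageP; exists c.
rewrite (coord_span Hw).
apply: (big_ind (fun w => exists2 c, c \in C & w = map_mx f c)).
- by exists 0; rewrite ?mem0v //; apply/matrixP => r s; rewrite !mxE f0.
- move=> _ _ [c1 C1 ->] [c2 C2 ->]; exists (c1 + c2); first exact: memvD.
  by apply/matrixP => r s; rewrite !mxE fD.
- move=> j _; have /imageP [c Cc ->] : S`_j \in S by apply: mem_nth; rewrite size_map -cardE ltn_ord.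
  exists ((coord S j w) ^+ (q ^ (m - i)) *: c); first exact: memvZ.
  by apply/matrixP => r s; rewrite !mxE fZ.
Qed.

Lemma char_full (f : L -> L) : Fq_lin_aut q f -> fully_linear f ->
  f 1 != 0 /\ exists2 i, (i < m)%N & forall x, f x = f 1 * x ^+ (q ^ i).
Proof.
move=> [[fD fF] fbij] fl.
have finj := bij_inj fbij.
have f0 : f 0 = 0 by apply: (addrI (f 0)); rewrite -fD !addr0.
have f10 : f 1 != 0.
  by apply/eqP => h; have := finj 1 0; rewrite h f0 => /(_ erefl) /eqP; rewrite oner_eq0.
have fmul : forall x b, f (x * b) = f x * f b / f 1.
  move=> x b.
  pose v : 'rV[L]_2 := \row_(j < 2) (if val j == 0%N then 1 else b).
  have [D HD] := fl 2 isT <[v]>%VS.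
  have fvD : map_mx f v \in D by apply/HD; exists v; [exact: memv_line|].
  have /HD [c] : (f x / f 1) *: map_mx f v \in D by exact: memvZ.
  move=> /vlineP [y ->] E.
  have E0 := congr1 (fun M : 'rV[L]_2 => M ord0 ord0) E.
  have E1 := congr1 (fun M : 'rV[L]_2 => M ord0 (@Ordinal 2 1 isT)) E.
  rewrite !mxE /= mulr1 divfK // in E0 E1.
  by rewrite -(finj _ _ E0) in E1; rewrite -E1 mulrAC.
split => //.
pose g x := f x / f 1.
have [i im gE] : exists2 i, (i < m)%N & forall x, g x = x ^+ (q ^ i).
  apply: aut_char.
  - by move=> x y; rewrite /g fD mulrDl.
  - by move=> x y; rewrite /g fmul -!mulrA; congr (_ * _); rewrite mulrCA.
  - by rewrite /g divff.
  - by move=> c Fc; rewrite /g -{1}(mulr1 c) fF // mulfK.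
exists i => // x; have := gE x; rewrite /g => <-.
by rewrite mulrC divfK.
Qed.
End Field.

Theorem theorem2 (p k q m : nat) (L : finFieldType) :
  prime p -> (0 < k)%N -> q = (p ^ k)%N -> (0 < m)%N -> #|L| = (q ^ m)%N ->
  exists s : seq {ffun L -> L},
    [/\ uniq s,
        (forall f : {ffun L -> L}, f \in s <-> (Fq_lin_aut q f /\ fully_linear f))
      & size s = (m * (q ^ m - 1))%N].
Proof.
move=> pp kp qE mp cardL.
pose F (ai : L * 'I_m) : {ffun L -> L} := [ffun x => ai.1 * x ^+ (q ^ ai.2)].
pose A := setX [set~ (0 : L)] [set: 'I_m].
exists [seq F ai | ai <- enum A]; split.
- rewrite map_inj_in_uniq ?enum_uniq // => [[a i] [b j]].
  rewrite !mem_enum => /setXP [ha _] /setXP [hb _] /= E.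
  rewrite in_setC1 in ha.
  have e1 := congr1 (fun h : {ffun L -> L} => h 1) E.
  rewrite /= !ffunE /= !expr1n !mulr1 in e1; subst b.
  have Ex : forall x : L, x ^+ (q ^ i) = x ^+ (q ^ j).
    move=> x; have := congr1 (fun h : {ffun L -> L} => h x) E.
    by rewrite /= !ffunE => /(mulfI ha).
  have ij := pow_inj pp kp qE mp cardL (ltn_ord i) (ltn_ord j) Ex.
  by congr pair; apply: val_inj.
- move=> f; split.
  + case/mapP => [[a i]]; rewrite mem_enum => /setXP [ha _] ->.
    rewrite in_setC1 in ha.
    by apply: (good_aut pp kp qE cardL ha (ltn_ord i)) => x; rewrite ffunE.
  + case=> H1 H2; have [f10 [i im fE]] := char_full pp kp qE mp cardL H1 H2.
    apply/mapP; exists (f 1, Ordinal im).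
      by rewrite mem_enum; apply/setXP; split; rewrite ?in_setC1 ?in_setT.
    by apply/ffunP => x; rewrite ffunE /= -fE.
- by rewrite size_map -cardE cardsX cardsC1 cardsT card_ord cardL subn1 mulnC.
Qed.
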